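(* Let $\mathcal K$ be a compact subset of $\mathcal L_{\mathbb C}$. Then for all $x\in\mathbf S^3$ and $w\in\mathcal K$, \[d_E(x,w^\perp)=\frac{|\langle x,w\rangle|}{\|x\|\,\|w\|},\] and there is a constant $C\ge1$ (depending only on $\mathcal K$) such that for all $x\in\mathbf S^3$, $w\in\mathcal K$, \[C^{-1}d_E(x,w^\perp)\le d_E(x,L_w)\le C\,d_E(x,w^\perp),\qquad C^{-1}d_E(x,L_w)\le d(x,L_w)\le C\,d_E(x,L_w).\]
   Context: On $\mathbb{C}^3$: $u\cdot v=\sum u_i\bar v_i$, $\|u\|=\sqrt{u\cdot u}$, $\langle u,v\rangle=u_0\bar v_0-u_1\bar v_1-u_2\bar v_2$, $q(u)=\langle u,u\rangle$, $\|u\wedge v\|^2=\|u\|^2\|v\|^2-|u\cdot v|^2$. On $\mathbb P^2_{\mathbb C}$, $d_E(u,v)=\|u\wedge v\|/(\|u\|\|v\|)$. $\mathbf S^3=\{u:q(u)=0\}$ with visual metric $d(u,v)=\sqrt{|\langle u,v\rangle|/(\|u\|\|v\|)}$. $\mathcal L_{\mathbb C}=\{w\in\mathbb P^2_{\mathbb C}:q(w)<0\}$ with metric $d_E$; $w^\perp=\{u\in\mathbb P^2_{\mathbb C}:\langle u,w\rangle=0\}$ and $L_w=w^\perp\cap\mathbf S^3$ is the associated chain. Distances to sets are infima over points of the set: $d_E(x,w^\perp)$ in $\mathbb P^2_{\mathbb C}$, $d_E(x,L_w)$ and $d(x,L_w)$ over $L_w$. *)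

(* Defs.v *)
From HB Require Import structures.
From mathcomp Require Import all_boot all_order all_algebra.
From mathcomp Require Import complex.
From mathcomp Require Import all_classical all_reals all_analysis.
Set Implicit Arguments. Unset Strict Implicit. Unset Printing Implicit Defensive.
Import Order.TTheory GRing.Theory Num.Theory.
Import numFieldNormedType.Exports.
Local Open Scope ring_scope.
Local Open Scope classical_set_scope.

Section Defs.
Variable R : realType.
Local Notation C := R[i].
(* vectors of C^3 are row vectors; a point of P^2_C is represented by any nonzero vector *)
Local Notation V := 'rV[C]_3.

Definition i0 : 'I_3 := inord 0.
Definition i1 : 'I_3 := inord 1.
Definition i2 : 'I_3 := inord 2.

Definition modc (z : C) : R := ComplexField.Normc.normc z.

Definition dotc (u v : V) : C := \sum_(i < 3) u ord0 i * (v ord0 i)^*%C.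
Definition normv (u : V) : R := Num.sqrt (complex.Re (dotc u u)).
Definition herm (u v : V) : C :=
  u ord0 i0 * (v ord0 i0)^*%C - u ord0 i1 * (v ord0 i1)^*%C
  - u ord0 i2 * (v ord0 i2)^*%C.
Definition qf (u : V) : C := herm u u.
Definition wedgen (u v : V) : R :=
  Num.sqrt (normv u ^+ 2 * normv v ^+ 2 - modc (dotc u v) ^+ 2).
Definition dE (u v : V) : R := wedgen u v / (normv u * normv v).
Definition dvis (u v : V) : R := Num.sqrt (modc (herm u v) / (normv u * normv v)).

Definition S3 : set V := [set u | u != 0 /\ qf u = 0].
Definition LC : set V := [set w | w != 0 /\ qf w < 0].
Definition perp (w : V) : set V := [set u | u != 0 /\ herm u w = 0].
Definition chain (w : V) : set V := perp w `&` S3.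

Definition dist_to (d : V -> V -> R) (x : V) (A : set V) : R :=
  inf [set d x y | y in A].

Definition dE_compact (K : set V) : Prop :=
  forall u : nat -> V, (forall n, K (u n)) ->
  exists phi : nat -> nat,
    {homo phi : m n / (m < n)%N >-> (m < n)%N} /\
    exists2 w, K w & (fun n : nat => dE (u (phi n)) w) @ \oo --> (0 : R).

End Defs.

(* Main.v *)
Require Import Defs.
From HB Require Import structures.
From mathcomp Require Import all_boot all_order all_algebra.
From mathcomp Require Import complex.
From mathcomp Require Import all_classical all_reals all_analysis.
From mathcomp Require Import ring lra.
Import Order.TTheory GRing.Theory Num.Theory.
Local Open Scope ring_scope.
Local Open Scope classical_set_scope.

Module SubLib.
Set Implicit Arguments. Unset Strict Implicit. Unset Printing Implicit Defensive.
Local Open Scope complex_scope.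
Local Open Scope ring_scope.

Section S.
Variable R : realType.
Local Notation C := R[i].
Local Notation V := 'rV[C]_3.
Implicit Types (z a b : C) (u v : V).

Lemma val_i0 : (i0 : nat) = 0%N. Proof. by rewrite /= inordK. Qed.
Lemma val_i1 : (i1 : nat) = 1%N. Proof. by rewrite /= inordK. Qed.
Lemma val_i2 : (i2 : nat) = 2%N. Proof. by rewrite /= inordK. Qed.

Definition mk3 (a b c : C) : V := \row_(k < 3) nth 0 [:: a; b; c] k.
Lemma mk3_0 a b c : mk3 a b c ord0 i0 = a. Proof. by rewrite mxE val_i0. Qed.
Lemma mk3_1 a b c : mk3 a b c ord0 i1 = b. Proof. by rewrite mxE val_i1. Qed.
Lemma mk3_2 a b c : mk3 a b c ord0 i2 = c. Proof. by rewrite mxE val_i2. Qed.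

Lemma eqV (u v : V) : u ord0 i0 = v ord0 i0 -> u ord0 i1 = v ord0 i1 ->
  u ord0 i2 = v ord0 i2 -> u = v.
Proof.
move=> h0 h1 h2; apply/rowP => k.
have [->|[->|->]] : k = i0 \/ k = i1 \/ k = i2.
  case: k => [[|[|[|//]]] Hk].
  - by left; apply/val_inj; rewrite /= inordK.
  - by right; left; apply/val_inj; rewrite /= inordK.
  - by right; right; apply/val_inj; rewrite /= inordK.
all: by [].
Qed.

Lemma dotcE (u v : V) : dotc u v = u ord0 i0 * (v ord0 i0)^*%C + u ord0 i1 * (v ord0 i1)^*%C + u ord0 i2 * (v ord0 i2)^*%C.
Proof.
rewrite /dotc !big_ord_recr big_ord0 /= add0r.
have -> : (ord_max : 'I_3) = i2 by apply/val_inj; rewrite /= inordK.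
have -> : (widen_ord (leqnSn 2) ord_max : 'I_3) = i1 by apply/val_inj; rewrite /= inordK.
have -> : (widen_ord (leqnSn 2) (widen_ord (leqnSn 1) ord_max) : 'I_3) = i0 by apply/val_inj; rewrite /= inordK.
by [].
Qed.

Lemma modc_ge0 z : 0 <= modc z.
Proof. by case: z => a b; rewrite /modc /= sqrtr_ge0. Qed.

Lemma modc_sq z : modc z ^+ 2 = complex.Re z ^+ 2 + complex.Im z ^+ 2.
Proof. case: z => a b; rewrite /modc /= sqr_sqrtr //; apply: addr_ge0; apply: sqr_ge0. Qed.

Lemma mulcJ z : z * z^*%C = (modc z ^+ 2)%:C.
Proof.
rewrite modc_sq; case: z => a b /=.
apply/eqP; rewrite eq_complex /=; apply/andP; split; apply/eqP; ring.
Qed.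

Lemma normC_modc z : `|z| = (modc z)%:C.
Proof. by rewrite normc_def; case: z. Qed.

Lemma modcM a b : modc (a * b) = modc a * modc b.
Proof. exact: ComplexField.Normc.normcM. Qed.

Lemma modcJ a : modc a^*%C = modc a.
Proof. by case: a => x y; rewrite /modc /= sqrrN. Qed.

Lemma modcN a : modc (- a) = modc a.
Proof. by case: a => x y; rewrite /modc /= !sqrrN. Qed.

Lemma modcD a b : modc (a + b) <= modc a + modc b.
Proof. exact: le_normcD. Qed.

Lemma modc_eq0 a : (modc a == 0) = (a == 0).
Proof.
apply/eqP/eqP => [|->]; first exact: ComplexField.Normc.eq0_normc.
by rewrite /modc /= expr0n /= addr0 sqrtr0.
Qed.

Lemma modc_real (x : R) : modc x%:C = `|x|.
Proof. by rewrite /modc /= expr0n /= addr0 sqrtr_sqr. Qed.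

Lemma modcB a b : modc a - modc b <= modc (a - b).
Proof.
have := modcD (a - b) b; rewrite subrK; lra.
Qed.

Lemma modcV a : modc a^-1 = (modc a)^-1.
Proof. exact: ComplexField.Normc.normcV. Qed.

Definition N2 (u : V) : R := modc (u ord0 i0) ^+ 2 + modc (u ord0 i1) ^+ 2 + modc (u ord0 i2) ^+ 2.

Lemma dotcc (u : V) : dotc u u = (N2 u)%:C.
Proof. by rewrite dotcE !mulcJ /N2 !rmorphD. Qed.

Lemma N2_ge0 u : 0 <= N2 u.
Proof. rewrite /N2; apply: addr_ge0; [apply: addr_ge0|]; apply: sqr_ge0. Qed.

Lemma normvE u : normv u = Num.sqrt (N2 u).
Proof. by rewrite /normv dotcc. Qed.

Lemma normv_sq u : normv u ^+ 2 = N2 u.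
Proof. by rewrite normvE sqr_sqrtr // N2_ge0. Qed.

Lemma normv_ge0 u : 0 <= normv u.
Proof. by rewrite normvE sqrtr_ge0. Qed.

Lemma N2_eq0 u : N2 u = 0 -> u = 0.
Proof.
rewrite /N2 => h.
have h0 := sqr_ge0 (modc (u ord0 i0)).
have h1 := sqr_ge0 (modc (u ord0 i1)).
have h2 := sqr_ge0 (modc (u ord0 i2)).
have e0 : modc (u ord0 i0) ^+ 2 = 0 by lra.
have e1 : modc (u ord0 i1) ^+ 2 = 0 by lra.
have e2 : modc (u ord0 i2) ^+ 2 = 0 by lra.
have z k : modc (u ord0 k) ^+ 2 = 0 -> u ord0 k = 0.
  by move/eqP; rewrite sqrf_eq0 modc_eq0 => /eqP.
by apply: eqV; rewrite mxE; apply: z.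
Qed.

Lemma N2_gt0 u : u != 0 -> 0 < N2 u.
Proof.
move=> h; rewrite lt_neqAle N2_ge0 andbT; apply/eqP => /esym/N2_eq0 e.
by rewrite e eqxx in h.
Qed.


Lemma cjD a b : (a + b)^*%C = a^*%C + b^*%C. Proof. exact: rmorphD. Qed.
Lemma cjB a b : (a - b)^*%C = a^*%C - b^*%C. Proof. exact: rmorphB. Qed.
Lemma cjN a : (- a)^*%C = - a^*%C. Proof. exact: rmorphN. Qed.
Lemma cjM a b : (a * b)^*%C = a^*%C * b^*%C. Proof. exact: rmorphM. Qed.
Lemma cjV a : (a^-1)^*%C = (a^*%C)^-1. Proof. exact: conjc_inv. Qed.
Lemma cjR (x : R) : (x%:C)^*%C = x%:C. Proof. exact: conjc_real. Qed.
Ltac cj := rewrite ?(cjD, cjB, cjN, cjM, cjV, cjR, conjcK).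

Definition wv u v : V :=
  mk3 (u ord0 i0 * v ord0 i1 - u ord0 i1 * v ord0 i0)
      (u ord0 i0 * v ord0 i2 - u ord0 i2 * v ord0 i0)
      (u ord0 i1 * v ord0 i2 - u ord0 i2 * v ord0 i1).

Lemma lagr u v : N2 u * N2 v - modc (dotc u v) ^+ 2 = N2 (wv u v).
Proof.
apply: complexI; rewrite /N2 /wv !mk3_0 !mk3_1 !mk3_2.
rewrite raddfB !raddfD /= rmorphM /= -!mulcJ -!dotcc !dotcE.
cj; ring.
Qed.

Lemma CS u v : modc (dotc u v) ^+ 2 <= N2 u * N2 v.
Proof. have := lagr u v; have := N2_ge0 (wv u v); lra. Qed.

Lemma dotcC u v : dotc v u = (dotc u v)^*%C.
Proof. rewrite !dotcE; cj; ring. Qed.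

Lemma binet x y n : dotc (wv x y) (wv n y) = dotc x n * dotc y y - dotc x y * dotc y n.
Proof. rewrite /wv !dotcE !mk3_0 !mk3_1 !mk3_2; cj; ring. Qed.

Lemma perp_lb x n y : dotc y n = 0 ->
  modc (dotc x n) ^+ 2 * N2 y <= N2 (wv x y) * N2 n.
Proof.
move=> yn.
have ny : dotc n y = 0 by rewrite dotcC yn conjc0.
have h := CS (wv x y) (wv n y).
rewrite binet yn mulr0 subr0 dotcc modcM modc_real ger0_norm ?N2_ge0 // in h.
rewrite -[N2 (wv n y)]lagr ny modc_real normr0 expr0n /= subr0 in h.
have [y0|ypos] := eqVneq (N2 y) 0.
  by rewrite y0 mulr0; apply: mulr_ge0; apply: N2_ge0.
have yp : 0 < N2 y by rewrite lt_neqAle eq_sym ypos N2_ge0.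
rewrite -(ler_pM2r yp); move: h; rewrite exprMn; nra.
Qed.

End S.


Section S2.
Variable R : realType.
Local Notation C := R[i].
Local Notation V := 'rV[C]_3.
Implicit Types (a b c : C) (u v x y w z n : V).
Ltac cj := rewrite ?(cjD, cjB, cjN, cjM, cjV, cjR, conjcK).

Definition Jv u : V := mk3 (u ord0 i0) (- u ord0 i1) (- u ord0 i2).

Lemma herm_dotc u w : herm u w = dotc u (Jv w).
Proof. rewrite /herm dotcE /Jv !mk3_0 !mk3_1 !mk3_2; cj; ring. Qed.

Lemma N2J u : N2 (Jv u) = N2 u.
Proof. by rewrite /N2 /Jv !mk3_0 !mk3_1 !mk3_2 !modcN. Qed.

Lemma hermJ u v : herm v u = (herm u v)^*%C.
Proof. rewrite /herm; cj; ring. Qed.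

Definition Qr u : R := modc (u ord0 i0) ^+ 2 - modc (u ord0 i1) ^+ 2 - modc (u ord0 i2) ^+ 2.

Lemma qfE u : qf u = (Qr u)%:C.
Proof. by rewrite /qf /herm !mulcJ /Qr !raddfB. Qed.

Lemma wedgenE u v : wedgen u v = Num.sqrt (N2 (wv u v)).
Proof. by rewrite /wedgen !normv_sq lagr. Qed.

Lemma dEE u v : dE u v = Num.sqrt (N2 (wv u v) / (N2 u * N2 v)).
Proof.
have h : 0 <= N2 u * N2 v by apply: mulr_ge0; apply: N2_ge0.
by rewrite /dE wedgenE !normvE -sqrtrM ?N2_ge0 // -sqrtrV // -sqrtrM ?N2_ge0.
Qed.

Lemma dE_ge0 u v : 0 <= dE u v.
Proof. by rewrite dEE sqrtr_ge0. Qed.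

Lemma dvis_ge0 u v : 0 <= dvis u v.
Proof. by rewrite /dvis sqrtr_ge0. Qed.

Lemma dist_le (d : V -> V -> R) x (A : set V) y :
  A y -> (forall z, A z -> 0 <= d x z) -> dist_to d x A <= d x y.
Proof.
move=> Ay h; rewrite /dist_to; apply: ge_inf; last by exists y.
by exists 0 => r [z Az <-]; apply: h.
Qed.

Lemma dist_ge (d : V -> V -> R) x (A : set V) (c : R) :
  A !=set0 -> (forall z, A z -> c <= d x z) -> c <= dist_to d x A.
Proof.
move=> [y Ay] h; rewrite /dist_to; apply: lb_le_inf; first by exists (d x y), y.
by move=> r [z Az <-]; apply: h.
Qed.

Lemma dist_ge0 (d : V -> V -> R) x (A : set V) :
  (forall z, A z -> 0 <= d x z) -> 0 <= dist_to d x A.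
Proof.
move=> h; have [->|ne] := eqVneq A set0.
  by rewrite /dist_to image_set0 inf0.
by apply: dist_ge => //; apply/set0P.
Qed.

Lemma dist_eq (d : V -> V -> R) x (A : set V) y :
  A y -> (forall z, A z -> 0 <= d x z) ->
  (forall z, A z -> d x y <= d x z) -> dist_to d x A = d x y.
Proof.
move=> Ay h0 h; apply/eqP; rewrite eq_le; apply/andP; split.
  exact: dist_le.
by apply: dist_ge => //; exists y.
Qed.


Lemma dotc_sub_l x n c : dotc (x - c *: n) n = dotc x n - c * dotc n n.
Proof. rewrite !dotcE !mxE; cj; ring. Qed.
Lemma dotc_sub_r x n c : dotc x (x - c *: n) = dotc x x - c^*%C * dotc x n.
Proof. rewrite !dotcE !mxE; cj; ring. Qed.
Lemma dotc_sub_sub x n c : dotc (x - c *: n) (x - c *: n) =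
  dotc x x - c^*%C * dotc x n - c * dotc n x + c * c^*%C * dotc n n.
Proof. rewrite !dotcE !mxE; cj; ring. Qed.
Lemma qfZ c n : qf (c *: n) = c * c^*%C * qf n.
Proof. rewrite /qf /herm !mxE; cj; ring. Qed.
Lemma qfJ w : qf (Jv w) = qf w.
Proof. rewrite /qf /herm /Jv !mk3_0 !mk3_1 !mk3_2; cj; ring. Qed.

Lemma N2_real x : (N2 x)%:C != 0 = (x != 0).
Proof.
apply/idP/idP => [|h].
  by apply: contraNN => /eqP ->; rewrite /N2 !mxE modc_real normr0 expr0n /= !addr0.
by rewrite eq_complex /= negb_and; have := N2_gt0 h; rewrite lt0r => /andP[->].
Qed.

Lemma dE_lb x z (a : R) : 0 <= a -> x != 0 -> z != 0 ->
  a * (N2 x * N2 z) <= N2 (wv x z) -> Num.sqrt a <= dE x z.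
Proof.
move=> a0 xn zn h; rewrite dEE ler_sqrt; last first.
  by apply: divr_ge0; [apply: N2_ge0 | apply: mulr_ge0; apply: N2_ge0].
by rewrite ler_pdivlMr // mulr_gt0 // N2_gt0.
Qed.

Lemma part1 x w : S3 x -> LC w ->
  dist_to (@dE R) x (perp w) = modc (herm x w) / (normv x * normv w).
Proof.
move=> [xn0 qx] [wn0 qw].
have qw0 : qf w != 0 by rewrite lt_eqF.
set n := Jv w.
have Nn : N2 n = N2 w by rewrite N2J.
have hxw : herm x w = dotc x n by rewrite herm_dotc.
set k := dotc x n.
have Nxp := N2_gt0 xn0; have Nwp := N2_gt0 wn0.
have Nnp : 0 < N2 n by rewrite Nn.
set m2 := modc k ^+ 2.
have m20 : 0 <= m2 by apply: sqr_ge0.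
have val : modc (herm x w) / (normv x * normv w) = Num.sqrt (m2 / (N2 x * N2 n)).
  rewrite (sqrtrM _ m20) /m2 sqrtr_sqr ger0_norm ?modc_ge0 //.
  rewrite sqrtrV ?(mulr_ge0, N2_ge0) // (sqrtrM _ (N2_ge0 x)) hxw !normvE Nn //.
rewrite val.
set c := k / (N2 n)%:C.
set y0 := x - c *: n.
have Nnc : (N2 n)%:C != 0 by rewrite N2_real -N2_real Nn N2_real.
have cJ : c^*%C = k^*%C / (N2 n)%:C by rewrite /c; cj.
have kk : k * k^*%C = m2%:C by rewrite mulcJ.
set beta := N2 x - m2 / N2 n.
have e1 : dotc y0 n = 0.
  rewrite /y0 dotc_sub_l dotcc /c -/k; move: (N2 n)%:C Nnc => r rn; field => //.
have e2 : dotc x y0 = beta%:C.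
  rewrite /y0 dotc_sub_r dotcc cJ /beta raddfB /= fmorph_div /= -kk -/k.
  move: (N2 n)%:C Nnc => r rn; field => //.
have e3 : dotc y0 y0 = beta%:C.
  rewrite /y0 dotc_sub_sub !dotcc cJ -/k (dotcC x n) -/k /c /beta raddfB /= fmorph_div /= -kk.
  move: (N2 n)%:C Nnc => r rn; field => //.
have Ny0 : N2 y0 = beta by apply: complexI; rewrite -dotcc.
have y0n : y0 != 0.
  apply/negP => /eqP y00.
  have xc : x = c *: n by apply: subr0_eq.
  have : qf x = c * c^*%C * qf w by rewrite xc qfZ qfJ.
  rewrite qx mulcJ => /esym/eqP; rewrite mulf_eq0 (negbTE qw0) orbF.
  rewrite eq_complex /= eqxx andbT sqrf_eq0 modc_eq0 => /eqP c0.
  by move: xn0; rewrite xc c0 scale0r eqxx.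
have betap : 0 < beta by rewrite -Ny0 N2_gt0.
have py0 : perp w y0 by split => //; rewrite herm_dotc.
have dy0 : dE x y0 = Num.sqrt (m2 / (N2 x * N2 n)).
  rewrite dEE -lagr Ny0 e2 modc_real ger0_norm; last by apply: ltW.
  congr Num.sqrt; rewrite /beta; field.
  have hb : N2 x * N2 n - m2 = beta * N2 n by rewrite /beta; field; rewrite gt_eqF.
  by rewrite hb !mulf_neq0 ?gt_eqF.
rewrite -dy0; apply: dist_eq => // [z _|z [zn0 hz]]; first exact: dE_ge0.
rewrite dy0; apply: dE_lb => //; first by apply: divr_ge0 => //; rewrite mulr_ge0 // ?N2_ge0.
have := perp_lb x (y:=z) (n:=n); rewrite -herm_dotc hz => /(_ erefl) h.
have -> : m2 / (N2 x * N2 n) * (N2 x * N2 z) = m2 * N2 z / N2 n.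
  by field; rewrite !gt_eqF.
by rewrite ler_pdivrMr.
Qed.

End S2.


Section S3s.
Variable R : realType.
Local Notation C := R[i].
Local Notation V := 'rV[C]_3.
Implicit Types (a b c t : C) (u v x y w z n p : V).
Ltac cj := rewrite ?(cjD, cjB, cjN, cjM, cjV, cjR, conjcK).

Lemma Qr_lt0 w : qf w < 0 -> Qr w < 0.
Proof. by rewrite qfE -ltcR. Qed.

Lemma Qr_eq0 w : qf w = 0 -> Qr w = 0.
Proof. by rewrite qfE => -[]. Qed.

Definition crossv w p : V :=
  mk3 (w ord0 i1 * p ord0 i2 - w ord0 i2 * p ord0 i1)^*%C
      (w ord0 i0 * p ord0 i2 - w ord0 i2 * p ord0 i0)^*%C
      (w ord0 i1 * p ord0 i0 - w ord0 i0 * p ord0 i1)^*%C.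

Lemma cross_w w p : herm (crossv w p) w = 0.
Proof. rewrite /herm /crossv !mk3_0 !mk3_1 !mk3_2; cj; ring. Qed.
Lemma cross_p w p : herm (crossv w p) p = 0.
Proof. rewrite /herm /crossv !mk3_0 !mk3_1 !mk3_2; cj; ring. Qed.
Lemma cross_q w p : qf (crossv w p) = qf w * qf p - herm w p * herm p w.
Proof. rewrite /qf /herm /crossv !mk3_0 !mk3_1 !mk3_2; cj; ring. Qed.

Lemma hermDZl p a v w : herm (p + a *: v) w = herm p w + a * herm v w.
Proof. rewrite /herm !mxE; cj; ring. Qed.
Lemma hermDZr p a v w : herm w (p + a *: v) = herm w p + a^*%C * herm w v.
Proof. rewrite /herm !mxE; cj; ring. Qed.
Lemma dotcDZ p a v : dotc (p + a *: v) (p + a *: v) =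
  dotc p p + a^*%C * dotc p v + a * dotc v p + a * a^*%C * dotc v v.
Proof. rewrite !dotcE !mxE; cj; ring. Qed.
Lemma qfDZ p a v : qf (p + a *: v) =
  qf p + a^*%C * herm p v + a * herm v p + a * a^*%C * qf v.
Proof. rewrite /qf /herm !mxE; cj; ring. Qed.

Lemma Re_le_modc a : complex.Re a <= modc a.
Proof.
have h := modc_sq a; have h1 := modc_ge0 a; have h2 := sqr_ge0 (complex.Im a).
case: (lerP (complex.Re a) 0) => hr; first lra.
rewrite -(ler_pXn2r (n:=2)) // ?nnegrE ?(ltW hr) //; lra.
Qed.

Lemma absRe_le_modc a : - complex.Re a <= modc a.
Proof. have := Re_le_modc (- a); rewrite modcN; by case: a. Qed.


Lemma ReJ a : complex.Re a^*%C = complex.Re a. Proof. by case: a. Qed.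
Lemma ReR (r : R) : complex.Re r%:C = r. Proof. by []. Qed.
Lemma ReD a b : complex.Re (a + b) = complex.Re a + complex.Re b. Proof. by case: a; case: b. Qed.
Lemma ReB a b : complex.Re (a - b) = complex.Re a - complex.Re b. Proof. by case: a; case: b. Qed.
Lemma ReRM (r : R) a : complex.Re (r%:C * a) = r * complex.Re a.
Proof. by case: a => u v /=; rewrite mul0r subr0. Qed.

Lemma ReC2 a : (2 * complex.Re a)%:C = a + a^*%C.
Proof. case: a => u v; apply/eqP; rewrite eq_complex /=; apply/andP; split; apply/eqP; ring. Qed.

Lemma N2_0 : N2 (0:V) = 0.
Proof. apply: complexI; rewrite -dotcc dotcE !mxE !mul0r !addr0 //. Qed.

Lemma hermBZl x t w q : herm (x - t *: w) q = herm x q - t * herm w q.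
Proof. rewrite /herm !mxE; cj; ring. Qed.
Lemma qfBZ x t w : qf (x - t *: w) =
  qf x - t^*%C * herm x w - t * herm w x + t * t^*%C * qf w.
Proof. rewrite /qf /herm !mxE; cj; ring. Qed.

Lemma constr x w : S3 x -> LC w -> exists y, [/\ chain w y,
  modc (herm x y) * (- Qr w) = modc (herm x w) ^+ 2 &
  N2 x - 2 * (modc (herm x w) * modc (dotc x w) / (- Qr w)) <= N2 y].
Proof.
move=> [xn0 qx] [wn0 qw].
have Qw := Qr_lt0 qw.
have qwE := qfE w.
have qw0 : (Qr w)%:C != 0 by rewrite -qwE lt_eqF.
move Eh: (herm x w) => h.
have [t tE] : exists t, t = h / (Qr w)%:C by eexists.
have tJ : t^*%C = h^*%C / (Qr w)%:C by rewrite tE; cj.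
have [p pE] : exists p, p = x - t *: w by eexists.
have xE : x = p + t *: w by rewrite pE subrK.
have hpw : herm p w = 0.
  rewrite pE hermBZl Eh -/(qf w) qwE tE; move: (Qr w)%:C qw0 => r r0; field => //.
have hwp : herm w p = 0 by rewrite (hermJ p w) hpw conjc0.
set m := modc h ^+ 2.
have hh : h * h^*%C = m%:C by rewrite mulcJ.
have Qp : Qr p = m / (- Qr w).
  apply: complexI; rewrite -qfE pE qfBZ qx Eh (hermJ x w) Eh qwE tJ tE.
  rewrite fmorph_div /= raddfN /= -hh; move: (Qr w)%:C qw0 => r r0; field => //.
have m0 : 0 <= m by apply: sqr_ge0.
have Qp0 : 0 <= Qr p by rewrite Qp divr_ge0 // lerNr oppr0 ltW.
set v := crossv w p.
have Qv : Qr v = Qr w * Qr p.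
  by apply: complexI; rewrite -qfE cross_q hpw mulr0 subr0 !qfE rmorphM.
have hvw : herm v w = 0 by apply: cross_w.
have hvp : herm v p = 0 by apply: cross_p.
have hpv : herm p v = 0 by rewrite (hermJ v p) hvp conjc0.
set s := Num.sqrt (Qr p / (- Qr v)).
have s0 : 0 <= s by apply: sqrtr_ge0.
have ss : s ^+ 2 = Qr p / (- Qr v).
  rewrite sqr_sqrtr //; apply: divr_ge0 => //; rewrite Qv -mulNr; apply: mulr_ge0 => //; lra.
set e : R := if 0 <= complex.Re (dotc p v) then 1 else -1.
have ee : e ^+ 2 = 1 by rewrite /e; case: ifP => _; rewrite ?expr1n ?sqrrN ?expr1n.
have eRe : 0 <= e * complex.Re (dotc p v).
  by rewrite /e; case: ifP => h0; rewrite ?mul1r ?mulN1r // lerNr oppr0; move/negbT: h0; rewrite -ltNge => /ltW.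
set al := e * s.
set y := p + al%:C *: v.
have al2 : al ^+ 2 = s ^+ 2 by rewrite /al exprMn ee mul1r.
have hyw : herm y w = 0 by rewrite /y hermDZl hpw hvw mulr0 addr0.
have qy : qf y = 0.
  rewrite /y qfDZ hpv hvp !mulr0 !addr0 cjR !qfE.
  suff H : Qr p + al * al * Qr v = 0 by rewrite -!rmorphM -rmorphD /= H.
  have -> : al * al = s ^+ 2 by rewrite -al2 expr2.
  rewrite ss; have [p0|pn0] := eqVneq (Qr p) 0.
    by rewrite Qv p0 !(mulr0, mul0r, add0r).
  have Qvn : Qr v != 0 by rewrite Qv mulf_neq0 // lt_eqF.
  by field.
have hxy : herm x y = (Qr p)%:C.
  rewrite /y hermDZr cjR xE !hermDZl hpv hwp.
  rewrite (hermJ v w) hvw conjc0 -/(qf p) qfE; ring.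
have pn0 : p != 0.
  apply/negP => /eqP p0; move: xE; rewrite p0 add0r => xE'.
  have : qf x = t * t^*%C * qf w by rewrite xE' qfZ.
  rewrite qx mulcJ => /esym/eqP; rewrite mulf_eq0 (lt_eqF qw) orbF.
  rewrite eq_complex /= eqxx andbT sqrf_eq0 modc_eq0 => /eqP t0.
  by move: xn0; rewrite xE' t0 scale0r eqxx.
have Nyp : N2 p <= N2 y.
  have E : (N2 y)%:C = (N2 p)%:C + al%:C * (2 * complex.Re (dotc p v))%:C + (al ^+ 2 * N2 v)%:C.
    rewrite -!dotcc /y dotcDZ cjR (dotcC p v) ReC2 [(al ^+ 2 * N2 v)%:C]rmorphM /= -dotcc rmorphXn /=; ring.
  have E' := congr1 (@complex.Re R) E; rewrite !ReD ReRM !ReR in E'.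
  rewrite E' -addrA lerDl; apply: addr_ge0; last by rewrite mulr_ge0 ?sqr_ge0 ?N2_ge0.
  by rewrite /al mulrCA -mulrA; apply: mulr_ge0 => //; rewrite mulrCA mulr_ge0.
have ypos : y != 0.
  apply/eqP => y0; have := lt_le_trans (N2_gt0 pn0) Nyp; rewrite y0 N2_0 ltxx //.
exists y; split; first by split; split.
  rewrite hxy modc_real ger0_norm // Qp /m divfK //.
  by rewrite oppr_eq0 lt_eqF.
apply: le_trans Nyp.
set z := t^*%C * dotc x w.
have E : (N2 p)%:C = (N2 x)%:C - (z + z^*%C) + (modc t ^+ 2 * N2 w)%:C.
  rewrite -!dotcc pE dotc_sub_sub (dotcC x w) /z [(_ * N2 w)%:C]rmorphM /= -mulcJ !dotcc; cj; ring.
have E' := congr1 (@complex.Re R) E; rewrite ReD ReB !ReR ReD ReJ in E'.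
rewrite E'.
have mz : modc z = modc h / (- Qr w) * modc (dotc x w).
  rewrite /z modcM modcJ tE modcM modcV modc_real ltr0_norm //.
have := Re_le_modc z; rewrite mz => hz.
have : 0 <= modc t ^+ 2 * N2 w by rewrite mulr_ge0 ?sqr_ge0 ?N2_ge0.
have -> : modc h * modc (dotc x w) / - Qr w = modc h / - Qr w * modc (dotc x w) by rewrite mulrAC.
lra.
Qed.

End S3s.


Section S4.
Variable R : realType.
Local Notation C := R[i].
Local Notation V := 'rV[C]_3.
Implicit Types (a b c t : C) (u v x y w z n p : V).
Ltac cj := rewrite ?(cjD, cjB, cjN, cjM, cjV, cjR, conjcK).

Lemma dvisE x y : dvis x y = Num.sqrt (modc (herm x y) / Num.sqrt (N2 x * N2 y)).
Proof. by rewrite /dvis !normvE -sqrtrM // N2_ge0. Qed.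

Lemma S3_N2 x : S3 x -> N2 x = 2 * modc (x ord0 i0) ^+ 2.
Proof. move=> [_ /Qr_eq0]; rewrite /Qr /N2; lra. Qed.

Lemma pointwise x y : S3 x -> S3 y -> dE x y ^+ 2 <= 3 * dvis x y ^+ 2.
Proof.
move=> Sx Sy.
have Nx := S3_N2 Sx; have Ny := S3_N2 Sy.
have xp := N2_gt0 Sx.1; have yp := N2_gt0 Sy.1.
set a0 := modc (x ord0 i0); set b0 := modc (y ord0 i0).
have a00 : 0 <= a0 by apply: modc_ge0.
have b00 : 0 <= b0 by apply: modc_ge0.
set m := a0 * b0.
have a0p : 0 < a0 by move: xp; rewrite Nx -/a0 => xp; nra.
have b0p : 0 < b0 by move: yp; rewrite Ny -/b0 => yp; nra.
have mp : 0 < m by exact: mulr_gt0.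
have sq : Num.sqrt (N2 x * N2 y) = 2 * m.
  rewrite Nx Ny -/a0 -/b0.
  have -> : 2 * a0 ^+ 2 * (2 * b0 ^+ 2) = (2 * m) ^+ 2 by rewrite /m; ring.
  by rewrite sqrtr_sqr ger0_norm // mulr_ge0 // ltW.
set A := x ord0 i0 * (y ord0 i0)^*%C.
set sg := x ord0 i1 * (y ord0 i1)^*%C + x ord0 i2 * (y ord0 i2)^*%C.
have dxy : dotc x y = A + sg by rewrite dotcE /A /sg; ring.
have hxy : herm x y = A - sg by rewrite /herm /A /sg; ring.
have mA : modc A = m by rewrite /A modcM modcJ.
have sgm : modc sg <= m.
  have := CS (mk3 0 (x ord0 i1) (x ord0 i2)) (mk3 0 (y ord0 i1) (y ord0 i2)).
  rewrite dotcE !mk3_0 !mk3_1 !mk3_2 mul0r add0r -/sg.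
  rewrite /N2 !mk3_0 !mk3_1 !mk3_2 modc_real normr0 expr0n /= !add0r.
  move: Sx Sy => [_ /Qr_eq0] Qx [_ /Qr_eq0] Qy.
  have -> : modc (x ord0 i1) ^+ 2 + modc (x ord0 i2) ^+ 2 = a0 ^+ 2 by move: Qx; rewrite /Qr -/a0; lra.
  have -> : modc (y ord0 i1) ^+ 2 + modc (y ord0 i2) ^+ 2 = b0 ^+ 2 by move: Qy; rewrite /Qr -/b0; lra.
  rewrite -exprMn -/m => h; rewrite -(ler_pXn2r (n:=2)) ?nnegrE ?modc_ge0 ?(ltW mp) //.
set s := modc sg; set r := modc (A - sg); set P := modc (A + sg).
have s0 : 0 <= s by apply: modc_ge0.
have sm : s <= m by exact: sgm.
have m0 : 0 <= m by apply: ltW.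
have par : P ^+ 2 + r ^+ 2 = 2 * m ^+ 2 + 2 * s ^+ 2.
  have par' : (A + sg) * (A + sg)^*%C + (A - sg) * (A - sg)^*%C =
     (2:R)%:C * (A * A^*%C) + (2:R)%:C * (sg * sg^*%C) by cj; ring.
  rewrite !mulcJ in par'; have := congr1 (@complex.Re R) par'.
  by rewrite !ReD !ReRM !ReR -/P -/r -/s mA.
have r1 : r <= m + s by rewrite /r -mA /s; have := modcD A (- sg); rewrite modcN.
have r2 : m - s <= r by rewrite /r -mA /s; apply: modcB.
have r0 : 0 <= r by apply: modc_ge0.
have key : 2 * m ^+ 2 - 2 * s ^+ 2 + r ^+ 2 <= 6 * m * r.
  have h1 : (m - s) * (m + s) <= r * (2 * m).
    apply: ler_pM => //; lra.
  have h2 : r * r <= r * (2 * m) by apply: ler_wpM2l => //; lra.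
  nra.
rewrite dEE dvisE sq sqr_sqrtr; last by apply: divr_ge0; [apply: N2_ge0|apply: mulr_ge0; apply: N2_ge0].
rewrite sqr_sqrtr; last by apply: divr_ge0; [apply: modc_ge0|lra].
rewrite -lagr dxy hxy -/P -/r Nx Ny -/a0 -/b0.
have -> : 2 * a0 ^+ 2 * (2 * b0 ^+ 2) = 4 * m ^+ 2 by rewrite /m; ring.
rewrite ler_pdivrMr ?mulr_gt0 ?exprn_gt0 //.
have -> : 3 * (r / (2 * m)) * (4 * m ^+ 2) = 6 * m * r by field; rewrite gt_eqF.
lra.
Qed.

Lemma dE_le1 x y : x != 0 -> y != 0 -> dE x y <= 1.
Proof.
move=> xn yn; rewrite dEE -sqrtr1 ler_sqrt // ler_pdivrMr ?mul1r ?mulr_gt0 ?N2_gt0 //.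
rewrite -lagr; have := sqr_ge0 (modc (dotc x y)); lra.
Qed.

Lemma modc_herm x y : modc (herm x y) <= normv x * normv y.
Proof.
rewrite herm_dotc -(ler_pXn2r (n:=2)) ?nnegrE ?modc_ge0 ?mulr_ge0 ?normv_ge0 //.
by rewrite exprMn !normv_sq -(N2J y) CS.
Qed.

Lemma dvis_le1 x y : x != 0 -> y != 0 -> dvis x y <= 1.
Proof.
move=> xn yn; rewrite /dvis -sqrtr1 ler_sqrt // ler_pdivrMr ?mul1r ?mulr_gt0 //.
  exact: modc_herm.
all: by rewrite normvE sqrtr_gt0 N2_gt0.
Qed.

End S4.


Section S5.
Variable R : realType.
Local Notation C := R[i].
Local Notation V := 'rV[C]_3.
Implicit Types (x y w : V).

Lemma modc_dotc x y : modc (dotc x y) <= normv x * normv y.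
Proof.
rewrite -(ler_pXn2r (n:=2)) ?nnegrE ?modc_ge0 ?mulr_ge0 ?normv_ge0 //.
by rewrite exprMn !normv_sq CS.
Qed.

Lemma arith (M a X W Q Y H D Hy nx nw ny : R) :
  1 <= M -> 0 <= a -> 4 * M * a < 1 -> 0 < Q -> 0 < X -> 0 <= W -> 0 <= D ->
  0 <= nx -> 0 <= nw -> 0 <= ny ->
  nx ^+ 2 = X -> nw ^+ 2 = W -> ny ^+ 2 = Y ->
  Hy * Q = H ^+ 2 -> X - 2 * (H * D / Q) <= Y -> D <= nx * nw ->
  H = a * (nx * nw) -> W <= M * Q ->
  3 * (Hy / (nx * ny)) <= (4 * M * a) ^+ 2.
Proof.
move=> M1 a0 aM Q0 X0 W0 D0 nx0 nw0 ny0 enx enw eny hy hY hD hH hW.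
have H0 : 0 <= H by rewrite hH mulr_ge0 // mulr_ge0.
have s1 : H * D <= a * X * W.
  rewrite hH -enx -enw; have := ler_wpM2l (mulr_ge0 a0 (mulr_ge0 nx0 nw0)) hD; lra.
have s2 : H * D / Q <= a * M * X.
  rewrite ler_pdivrMr //; apply: le_trans s1 _.
  have := ler_wpM2l (mulr_ge0 a0 (ltW X0)) hW; lra.
have s3 : X / 2 <= Y.
  have : a * M * X <= X / 4.
    have : a * M <= 1/4 by lra.
    move=> h; have := ler_wpM2r (ltW X0) h; lra.
  lra.
have Y0 : 0 < Y by lra.
have s4 : X / 2 <= nx * ny.
  rewrite -(ler_pXn2r (n:=2)) ?nnegrE ?mulr_ge0 //; last by lra.
  rewrite [(nx * ny) ^+ 2]exprMn enx eny; nra.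
have nxy : 0 < nx * ny by lra.
have s5 : Hy = a ^+ 2 * X * W / Q.
  apply: (mulIf (x:=Q)); first by rewrite gt_eqF.
  by rewrite hy hH exprMn exprMn enx enw; field; rewrite gt_eqF.
suff : Hy / (nx * ny) <= 2 * M * a ^+ 2.
  move=> h; have : 6 * M * a ^+ 2 <= (4 * M * a) ^+ 2 by nra.
  lra.
rewrite ler_pdivrMr // s5 ler_pdivrMr //.
have t1 : a ^+ 2 * X * W <= a ^+ 2 * X * (M * Q).
  by apply: ler_wpM2l => //; rewrite mulr_ge0 ?sqr_ge0 // ltW.
apply: le_trans t1 _.
have t2 : 2 * M * a ^+ 2 * (X / 2) * Q <= 2 * M * a ^+ 2 * (nx * ny) * Q.
  apply: ler_wpM2r; first exact: ltW.
  apply: ler_wpM2l => //; rewrite mulr_ge0 ?sqr_ge0 //; lra.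
apply: le_trans t2; lra.
Qed.

Lemma good_y (M : R) x w : 1 <= M -> S3 x -> LC w -> N2 w <= M * (- Qr w) ->
  exists y, [/\ chain w y,
    dE x y <= 4 * M * (modc (herm x w) / (normv x * normv w)) &
    dvis x y <= 4 * M * (modc (herm x w) / (normv x * normv w))].
Proof.
move=> M1 Sx Lw hW.
have [y [cy hy1 hy2]] := constr Sx Lw.
set a := modc (herm x w) / (normv x * normv w).
exists y; suff [h1 h2] : dE x y <= 4 * M * a /\ dvis x y <= 4 * M * a by split.
have nxp : 0 < normv x by rewrite normvE sqrtr_gt0 N2_gt0 //; case: Sx.
have nwp : 0 < normv w by rewrite normvE sqrtr_gt0 N2_gt0 //; case: Lw.
have a0 : 0 <= a by rewrite /a divr_ge0 ?modc_ge0 // mulr_ge0 // ltW.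
have yn : y != 0 by case: cy => -[].
have xn : x != 0 by case: Sx.
have Q0 : 0 < - Qr w by have := Qr_lt0 Lw.2; lra.
case: (ltP (4 * M * a) 1) => [small|big]; last first.
  by split; apply: (le_trans _ big); [apply: dE_le1 | apply: dvis_le1].
have hH : modc (herm x w) = a * (normv x * normv w).
  by rewrite /a divfK // mulf_neq0 // gt_eqF.
have key := arith M1 a0 small Q0 (N2_gt0 xn) (N2_ge0 w) (modc_ge0 _)
  (normv_ge0 x) (normv_ge0 w) (normv_ge0 y) (normv_sq x) (normv_sq w) (normv_sq y)
  hy1 hy2 (modc_dotc x w) hH hW.
have dv2 : dvis x y ^+ 2 = modc (herm x y) / (normv x * normv y).
  by rewrite /dvis sqr_sqrtr // divr_ge0 ?modc_ge0 // mulr_ge0 ?normv_ge0.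
have pw := pointwise Sx cy.2.
have Ma0 : 0 <= 4 * M * a by rewrite mulr_ge0 //; lra.
split; rewrite -(ler_pXn2r (n:=2)) ?nnegrE ?dE_ge0 ?dvis_ge0 //.
  by apply: le_trans pw _; rewrite dv2.
rewrite dv2; apply: le_trans key; have := modc_ge0 (herm x y).
move=> h; have : 0 <= modc (herm x y) / (normv x * normv y).
  by rewrite divr_ge0 // mulr_ge0 ?normv_ge0.
lra.
Qed.

End S5.

Section S6.
Variable R : realType.
Local Notation C := R[i].
Local Notation V := 'rV[C]_3.
Implicit Types (x y w u : V).

Lemma ffl (p q1 q2 r s1 s2 : R) :
  0 <= (p * s1 - q1 * r) ^+ 2 -> 0 <= (p * s2 - q2 * r) ^+ 2 ->
  0 <= p ^+ 2 * r ^+ 2 -> 0 <= q1 ^+ 2 * s1 ^+ 2 -> 0 <= q1 ^+ 2 * s2 ^+ 2 ->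
  0 <= q2 ^+ 2 * s1 ^+ 2 -> 0 <= q2 ^+ 2 * s2 ^+ 2 ->
  (p * s1 + q1 * r) ^+ 2 + (p * s2 + q2 * r) ^+ 2 <= 2 * ((p ^+ 2 + q1 ^+ 2 + q2 ^+ 2) * (r ^+ 2 + s1 ^+ 2 + s2 ^+ 2)).
Proof. move=> *. nra. Qed.

Lemma csl (a b c d : R) : (a * c + b * d) ^+ 2 <= (a ^+ 2 + b ^+ 2) * (c ^+ 2 + d ^+ 2).
Proof. have := sqr_ge0 (a * d - b * c); nra. Qed.

Lemma real_D (p q1 q2 r s1 s2 e1 e2 W : R) :
  0 <= p -> 0 <= q1 -> 0 <= q2 -> 0 <= r -> 0 <= s1 -> 0 <= s2 ->
  (p * s1 - q1 * r) ^+ 2 <= e1 ^+ 2 -> (p * s2 - q2 * r) ^+ 2 <= e2 ^+ 2 ->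
  e1 ^+ 2 + e2 ^+ 2 <= W ->
  (p ^+ 2 * (r ^+ 2 + s1 ^+ 2 + s2 ^+ 2) - r ^+ 2 * (p ^+ 2 + q1 ^+ 2 + q2 ^+ 2)) ^+ 2
  <= 2 * W * ((p ^+ 2 + q1 ^+ 2 + q2 ^+ 2) * (r ^+ 2 + s1 ^+ 2 + s2 ^+ 2)).
Proof.
move=> p0 q10 q20 r0 s10 s20 h1 h2 hW.
set d1 := p * s1 - q1 * r; set d2 := p * s2 - q2 * r.
set f1 := p * s1 + q1 * r; set f2 := p * s2 + q2 * r.
have -> : p ^+ 2 * (r ^+ 2 + s1 ^+ 2 + s2 ^+ 2) - r ^+ 2 * (p ^+ 2 + q1 ^+ 2 + q2 ^+ 2)
  = d1 * f1 + d2 * f2 by rewrite /d1 /d2 /f1 /f2; ring.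
have cs : (d1 * f1 + d2 * f2) ^+ 2 <= (d1 ^+ 2 + d2 ^+ 2) * (f1 ^+ 2 + f2 ^+ 2).
  exact: csl.
have ff : f1 ^+ 2 + f2 ^+ 2 <= 2 * ((p ^+ 2 + q1 ^+ 2 + q2 ^+ 2) * (r ^+ 2 + s1 ^+ 2 + s2 ^+ 2)).
  by rewrite /f1 /f2; apply: ffl; rewrite ?sqr_ge0 ?mulr_ge0 ?sqr_ge0.
have dd : d1 ^+ 2 + d2 ^+ 2 <= W by rewrite /d1 /d2; lra.
have f0 : 0 <= f1 ^+ 2 + f2 ^+ 2 by rewrite addr_ge0 ?sqr_ge0.
apply: le_trans cs _.
have := ler_wpM2r f0 dd.
have W0 : 0 <= W by have := sqr_ge0 e1; have := sqr_ge0 e2; lra.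
have := ler_wpM2l W0 ff.
lra.
Qed.


Lemma sq_le (d e : R) : - e <= d -> d <= e -> d ^+ 2 <= e ^+ 2.
Proof. move=> h1 h2; nra. Qed.

Lemma diff_le (a b c d : C) : (modc a * modc b - modc c * modc d) ^+ 2 <= modc (a * b - c * d) ^+ 2.
Proof.
apply: sq_le; rewrite -!modcM.
  have := modcB (c * d) (a * b); rewrite -[c * d - a * b]opprB modcN; lra.
exact: modcB.
Qed.

Lemma alg (A B X Y Wv : R) : 0 < X -> 0 < Y -> (A * Y - B * X) ^+ 2 <= 2 * Wv * (X * Y) ->
  ((2 * A - X) / X - (2 * B - Y) / Y) ^+ 2 <= 8 * (Wv / (X * Y)).
Proof.
move=> X0 Y0 h.
have XY : 0 < X * Y by apply: mulr_gt0.
have -> : ((2 * A - X) / X - (2 * B - Y) / Y) ^+ 2 = 4 * (A * Y - B * X) ^+ 2 / (X * Y) ^+ 2.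
  by field; rewrite !gt_eqF.
rewrite ler_pdivrMr ?exprn_gt0 //.
have -> : 8 * (Wv / (X * Y)) * (X * Y) ^+ 2 = 8 * Wv * (X * Y) by field; rewrite !gt_eqF.
lra.
Qed.

Lemma Qr_N2 u : Qr u = 2 * modc (u ord0 i0) ^+ 2 - N2 u.
Proof. rewrite /Qr /N2; ring. Qed.

Lemma g_lip u w : u != 0 -> w != 0 ->
  (Qr u / N2 u - Qr w / N2 w) ^+ 2 <= 8 * dE u w ^+ 2.
Proof.
move=> un wn.
have up := N2_gt0 un; have wp := N2_gt0 wn.
rewrite dEE sqr_sqrtr; last by rewrite divr_ge0 ?N2_ge0 // mulr_ge0 ?N2_ge0.
have hW : modc (u ord0 i0 * w ord0 i1 - u ord0 i1 * w ord0 i0) ^+ 2 +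
          modc (u ord0 i0 * w ord0 i2 - u ord0 i2 * w ord0 i0) ^+ 2 <= N2 (wv u w).
  rewrite /N2 /wv !mk3_0 !mk3_1 !mk3_2; have := sqr_ge0 (modc (u ord0 i1 * w ord0 i2 - u ord0 i2 * w ord0 i1)); lra.
have hD := real_D (modc_ge0 (u ord0 i0)) (modc_ge0 (u ord0 i1)) (modc_ge0 (u ord0 i2))
  (modc_ge0 (w ord0 i0)) (modc_ge0 (w ord0 i1)) (modc_ge0 (w ord0 i2))
  (diff_le _ _ _ _) (diff_le _ _ _ _) hW.
rewrite !Qr_N2; apply: alg => //.
Qed.

Lemma inc_ge (phi : nat -> nat) : {homo phi : m n / (m < n)%N >-> (m < n)%N} ->
  forall n, (n <= phi n)%N.
Proof. by move=> h; elim => // n ih; apply: leq_ltn_trans ih (h _ _ (ltnSn n)). Qed.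

Lemma K_bound (K : set V) : K `<=` @LC R -> dE_compact K ->
  exists2 M : R, 1 <= M & forall w, K w -> N2 w <= M * (- Qr w).
Proof.
move=> KL Kc.
case: (pselect (exists2 M : R, 1 <= M & forall w, K w -> N2 w <= M * (- Qr w))) => // H.
exfalso.
have Hn : forall n : nat, exists w, K w /\ (n.+1%:R) * (- Qr w) < N2 w.
  move=> n; apply: contrapT => hn; apply: H; exists n.+1%:R; first by rewrite ler1n.
  move=> w Kw; rewrite leNgt; apply/negP => hlt; apply: hn; by exists w.
have [u hu] := choice Hn.
have [phi [phi_inc [w Kw cv]]] := Kc u (fun n => (hu n).1).
have [wn qw] := KL w Kw.
have wp := N2_gt0 wn.
have Qw := Qr_lt0 qw.
set ga := - (Qr w / N2 w).
have gap : 0 < ga by rewrite /ga -mulNr divr_gt0 //; lra.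
have g6 : 0 < ga / 6 by rewrite divr_gt0.
case: (cvgr_lt 0 cv (ga / 6) g6) => N _ hN.
set n0 := Num.truncn (2 / ga).
have hn0 : 2 / ga < n0.+1%:R by apply: Num.Theory.truncnS_gt.
set n := maxn N n0.
have hn : (N <= n)%N by apply: leq_maxl.
have dEn : dE (u (phi n)) w < ga / 6 by apply: hN.
set k := phi n.
have kn : (n0 <= k)%N by apply: leq_trans (leq_maxr N n0) (inc_ge phi_inc n).
have [Ku hk] := hu k.
have [un qu] := KL _ Ku.
have up := N2_gt0 un.
have lip := g_lip un wn.
set gu := - (Qr (u k) / N2 (u k)).
have e1 : (gu - ga) ^+ 2 < ga ^+ 2 / 4.
  have -> : (gu - ga) ^+ 2 = (Qr (u k) / N2 (u k) - Qr w / N2 w) ^+ 2 by rewrite /gu /ga; ring.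
  apply: le_lt_trans lip _.
  have d0 := dE_ge0 (u k) w.
  have : dE (u k) w ^+ 2 < (ga / 6) ^+ 2.
    by rewrite ltr_pXn2r ?nnegrE // ltW.
  have : 0 < ga ^+ 2 by apply: exprn_gt0.
  have -> : (ga / 6) ^+ 2 = ga ^+ 2 / 36 by field.
  lra.
have e2 : ga / 2 < gu by nra.
have e3 : gu < 1 / k.+1%:R.
  rewrite /gu ltr_pdivlMr ?ltr0Sn //.
  have -> : - (Qr (u k) / N2 (u k)) * k.+1%:R = (k.+1%:R * - Qr (u k)) / N2 (u k) by field; rewrite gt_eqF.
  by rewrite ltr_pdivrMr // mul1r.
have e4 : (1 / k.+1%:R : R) <= 1 / n0.+1%:R.
  by rewrite !div1r lef_pV2 ?posrE ?ltr0Sn // ler_nat.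
have e5 : 1 / n0.+1%:R < ga / 2.
  rewrite ltr_pdivrMr ?ltr0Sn //; move: hn0; rewrite ltr_pdivrMr //; lra.
by have := lt_trans e2 (lt_trans e3 (le_lt_trans e4 e5)); rewrite ltxx.
Qed.

End S6.

End SubLib.
Import SubLib.
Unset Implicit Arguments.

Lemma dE_le_2dvis (R : realType) (x y : 'rV[R[i]]_3) : S3 x -> S3 y -> dE x y <= 2 * dvis x y.
Proof.
move=> Sx Sy; have h := pointwise Sx Sy.
rewrite -(ler_pXn2r (n:=2)) ?nnegrE ?dE_ge0 ?mulr_ge0 ?dvis_ge0 //.
rewrite [(2 * _) ^+ 2]exprMn; have := sqr_ge0 (dvis x y); lra.
Qed.

Theorem lemma5p9 (R : realType) (K : set 'rV[R[i]]_3) :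
  K `<=` @LC R -> dE_compact K ->
  (forall x w, @S3 R x -> K w ->
     dist_to (@dE R) x (perp w) = modc (herm x w) / (normv x * normv w)) /\
  exists2 C : R, 1 <= C &
    forall x w, @S3 R x -> K w ->
      [/\ C^-1 * dist_to (@dE R) x (perp w) <= dist_to (@dE R) x (chain w),
          dist_to (@dE R) x (chain w) <= C * dist_to (@dE R) x (perp w),
          C^-1 * dist_to (@dE R) x (chain w) <= dist_to (@dvis R) x (chain w)
        & dist_to (@dvis R) x (chain w) <= C * dist_to (@dE R) x (chain w)].
Proof.
move=> KL Kc; split.
  by move=> x w Sx Kw; apply: part1 Sx (KL w Kw).
have [M M1 hM] := K_bound KL Kc.
exists (4 * M); first lra.
move=> x w Sx Kw.
have Lw := KL w Kw.
have [y [cy hdE hdv]] := good_y M1 Sx Lw (hM w Kw).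
rewrite (part1 Sx Lw).
set a := modc (herm x w) / (normv x * normv w).
have Cp : 0 < 4 * M by lra.
have ne : chain w !=set0 by exists y.
have lbE : forall z, chain w z -> a <= dE x z.
  move=> z cz; rewrite /a -(part1 Sx Lw); apply: dist_le; first exact: cz.1.
  by move=> ? _; apply: dE_ge0.
have aD : a <= dist_to (@dE R) x (chain w) by apply: dist_ge.
have a0 : 0 <= a.
  rewrite /a -(part1 Sx Lw); apply: dist_ge0 => ? _; apply: dE_ge0.
have DE0 : 0 <= dist_to (@dE R) x (chain w) by apply: dist_ge0 => ? _; apply: dE_ge0.
have DV0 : 0 <= dist_to (@dvis R) x (chain w) by apply: dist_ge0 => ? _; apply: dvis_ge0.
have DEy : dist_to (@dE R) x (chain w) <= dE x y by apply: dist_le => // ? _; apply: dE_ge0.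
have DVy : dist_to (@dvis R) x (chain w) <= dvis x y by apply: dist_le => // ? _; apply: dvis_ge0.
have half : dist_to (@dE R) x (chain w) / 2 <= dist_to (@dvis R) x (chain w).
  apply: dist_ge => // z cz.
  have h1 : dist_to (@dE R) x (chain w) <= dE x z by apply: dist_le => // ? _; apply: dE_ge0.
  have h2 := @dE_le_2dvis R x z Sx cz.2.
  lra.
split.
- rewrite ler_pdivrMl //; nra.
- exact: le_trans DEy hdE.
- rewrite ler_pdivrMl //; nra.
- apply: le_trans DVy _; apply: le_trans hdv _.
  by apply: ler_wpM2l => //; apply: ltW.
Qed.
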